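(* A real symmetric matrix has symmetric tropical rank one if and only if it has symmetric Kapranov rank one. Equivalently, the $2\times 2$ minors of an $n\times n$ symmetric matrix of indeterminates form a tropical basis.
   Context: Let $\tilde K$ be the field of Hahn series $\sum_{\alpha\in A}c_\alpha t^\alpha$ ($A\subset\mathbb R$ well-ordered, $c_\alpha\in\mathbb C$); for nonzero $a\in\tilde K$, $\deg(a)$ is the smallest exponent with nonzero coefficient. A symmetric lift of a real symmetric $n\times n$ matrix $A$ is a symmetric matrix $\tilde A$ over $\tilde K$ with all entries nonzero and $\deg(\tilde a_{i,j})=A_{i,j}$; the symmetric Kapranov rank of $A$ is the minimum rank of a symmetric lift. For an $r\times r$ submatrix of $A$ with row index set $I$ and column index set $J$, each bijection $\rho:I\to J$ gives a monomial $\prod_{i\in I}X_{i,\rho(i)}$ in commuting variables subject to $X_{i,j}=X_{j,i}$, with value $\sum_{i\in I}A_{i,\rho(i)}$; the submatrix is symmetrically tropically singular if the minimum value is attained by at least two distinct monomials. The symmetric tropical rank of $A$ is the largest $r$ such that $A$ has an $r\times r$ submatrix that is not symmetrically tropically singular. The $r\times r$ minors form a tropical basis if for every real symmetric $n\times n$ $A$: all $r\times r$ submatrices are symmetrically tropically singular iff $A$ has a symmetric lift of rank $\le r-1$. *)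

(* Defs.v *)
From HB Require Import structures.
From mathcomp Require Import all_boot all_order all_algebra.
From mathcomp Require Import boolp classical_sets functions fsbigop reals.
From mathcomp Require Import complex.
Set Implicit Arguments. Unset Strict Implicit. Unset Printing Implicit Defensive.
Import Order.TTheory GRing.Theory Num.Theory.
Local Open Scope ring_scope.
Local Open Scope classical_set_scope.

Section Hahn.
Variable R : realType.

Definition C := (R[i])%type.

(* A Hahn series sum_{a in A} c_a t^a is represented by its coefficient
   function R -> C; it is a Hahn series iff its support is well-ordered. *)
Definition supp (f : R -> C) : set R := [set a | f a != 0].

Definition hahn (f : R -> C) : Prop :=
  forall S : set R, S `<=` supp f -> S !=set0 ->
    exists2 m, S m & forall x, S x -> m <= x.

(* Product of Hahn series (Cauchy product); for Hahn series the index set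
   below is finite. *)
Definition hmul (f g : R -> C) : R -> C :=
  fun c => \sum_(a \in [set a | f a != 0 /\ g (c - a) != 0]) (f a * g (c - a)).

Definition has_deg (f : R -> C) (d : R) : Prop :=
  f d != 0 /\ forall x, f x != 0 -> d <= x.

Definition hrank_le1 n (L : 'I_n -> 'I_n -> R -> C) : Prop :=
  forall i j k l : 'I_n, hmul (L i k) (L j l) = hmul (L i l) (L j k).

Definition sym_lift n (A : 'M[R]_n) (L : 'I_n -> 'I_n -> R -> C) : Prop :=
  (forall i j, hahn (L i j)) /\ (forall i j, L i j = L j i) /\
  (forall i j, has_deg (L i j) (A i j)).

(* symmetric Kapranov rank one: minimum rank of a symmetric lift is 1.
   (Every lift has rank >= 1 when n > 0, since its entries are nonzero.) *)
Definition sym_kapranov_rank_one n (A : 'M[R]_n) : Prop :=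
  exists L, sym_lift A L /\ hrank_le1 L.

Definition upair n (i j : 'I_n) : 'I_n * 'I_n :=
  if (i <= j)%N then (i, j) else (j, i).

(* rho is a bijection I -> J (represented by a function on 'I_n,
   only its values on I matter) *)
Definition is_bij n (I J : {set 'I_n}) (rho : 'I_n -> 'I_n) : Prop :=
  {in I &, injective rho} /\ rho @: I = J.

(* monomial prod_{i in I} X_{i, rho i} with X_{ij} = X_{ji}, as the
   multiset (multiplicity function) of unordered pairs *)
Definition monomial n (I : {set 'I_n}) (rho : 'I_n -> 'I_n) : 'I_n * 'I_n -> nat :=
  fun p => #|[set i in I | upair i (rho i) == p]|.

Definition mvalue n (A : 'M[R]_n) (I : {set 'I_n}) (rho : 'I_n -> 'I_n) : R :=
  \sum_(i in I) A i (rho i).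

Definition sym_trop_singular n (A : 'M[R]_n) (I J : {set 'I_n}) : Prop :=
  exists rho1 rho2,
    [/\ is_bij I J rho1, is_bij I J rho2,
        monomial I rho1 <> monomial I rho2,
        mvalue A I rho1 = mvalue A I rho2 &
        forall rho, is_bij I J rho -> mvalue A I rho1 <= mvalue A I rho].

Definition has_nonsing_sub n (A : 'M[R]_n) (r : nat) : Prop :=
  exists I J : {set 'I_n}, [/\ #|I| = r, #|J| = r & ~ sym_trop_singular A I J].

Definition sym_trop_rank_eq n (A : 'M[R]_n) (r : nat) : Prop :=
  has_nonsing_sub A r /\ forall r', (r < r')%N -> ~ has_nonsing_sub A r'.

Definition all_2x2_singular n (A : 'M[R]_n) : Prop :=
  forall I J : {set 'I_n}, #|I| = 2%N -> #|J| = 2%N -> sym_trop_singular A I J.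

End Hahn.

(* Main.v *)
Require Import Defs.
From mathcomp Require Import all_boot all_order all_algebra.
From mathcomp Require Import reals Rstruct.
From mathcomp Require Import boolp classical_sets functions fsbigop complex.
From mathcomp Require Import lra.
Set Implicit Arguments. Unset Strict Implicit. Unset Printing Implicit Defensive.
Import Order.TTheory GRing.Theory Num.Theory.

Section Helpers.
Local Open Scope ring_scope.
Local Open Scope classical_set_scope.
Variable R : realType.

Definition delta (a : R) : R -> C R := fun x => if x == a then 1 else 0.

Lemma hmul_delta (a b c : R) :
  hmul (delta a) (delta b) c = delta (a + b) c.
Proof.
rewrite /hmul /delta.
have [->|hc] := eqVneq c (a + b).
  have -> : [set x | (if x == a then 1 else 0) != 0 :> C R /\
                     (if a + b - x == b then 1 else 0) != 0 :> C R] = [set a].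
    apply/seteqP; split => x /=.
      by have [->|ne] := eqVneq x a => // -[]; rewrite eqxx.
    move=> ->; rewrite eqxx (addrC a b) addrK eqxx; split; exact: oner_neq0.

  by rewrite fsbig_set1 eqxx (addrC a b) addrK eqxx mulr1.
have -> : [set x | (if x == a then 1 else 0) != 0 :> C R /\
                   (if c - x == b then 1 else 0) != 0 :> C R] = set0.
  apply/seteqP; split => x //=.
  have [->|]:= eqVneq x a; last by move=> _ []; rewrite eqxx.
  have [hb|]:= eqVneq (c - a) b; last by move=> _ []; rewrite eqxx.
  by move: hc; rewrite -hb subrKC eqxx.
by rewrite fsbig_set0.
Qed.

Lemma hmul_deg (f g : R -> C R) df dg :
  has_deg f df -> has_deg g dg ->
  hmul f g (df + dg) = f df * g dg /\
  (forall c, c < df + dg -> hmul f g c = 0).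
Proof.
move=> [f0 fm] [g0 gm]; split.
  rewrite /hmul.
  have -> : [set a | f a != 0 /\ g (df + dg - a) != 0] = [set df].
    apply/seteqP; split => x /=.
      move=> [/fm h1 /gm h2]; apply/eqP; rewrite eq_le h1 andbT.
      by move: h2; rewrite lerBrDr addrC lerD2r.
    by move=> ->; rewrite addrC addKr; split.
  by rewrite fsbig_set1 addrC addKr.
move=> c hc; rewrite /hmul.
have -> : [set a | f a != 0 /\ g (c - a) != 0] = set0.
  apply/seteqP; split => x //= [/fm h1 /gm h2].
  move: hc; rewrite ltNge => /negP; apply.
  by move: h2; rewrite lerBrDr addrC; apply: le_trans; rewrite lerD2r.
by rewrite fsbig_set0.
Qed.

Lemma hmul_deg_eq (f g f' g' : R -> C R) df dg df' dg' :
  has_deg f df -> has_deg g dg -> has_deg f' df' -> has_deg g' dg' ->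
  hmul f g = hmul f' g' -> df + dg = df' + dg'.
Proof.
move=> hf hg hf' hg' E.
have [[e1 z1] [e2 z2]] := (hmul_deg hf hg, hmul_deg hf' hg').
have nz1 : f df * g dg != 0 by rewrite mulf_neq0 //; [case: hf | case: hg].
have nz2 : f' df' * g' dg' != 0 by rewrite mulf_neq0 //; [case: hf' | case: hg'].
case: (ltgtP (df + dg) (df' + dg')) => // h.
  by move: nz1; rewrite -e1 E z2 // eqxx.
by move: nz2; rewrite -e2 -E z1 // eqxx.
Qed.

End Helpers.

Section Comb.
Local Open Scope ring_scope.
Variable R : realType.
Variable n : nat.
Implicit Types (I J : {set 'I_n}) (rho : 'I_n -> 'I_n).

Lemma upair_eq (x y x' y' : 'I_n) : upair x y = upair x' y' ->
  (x = x' /\ y = y') \/ (x = y' /\ y = x').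
Proof.
rewrite /upair; case: leqP => _; case: leqP => _ [] -> ->; tauto.
Qed.

Lemma upair_r (x y z : 'I_n) : upair x y = upair x z -> y = z.
Proof. by case/upair_eq => [[_ ->] | [-> <-]]. Qed.

Lemma upair_l (x y z : 'I_n) : upair y x = upair z x -> y = z.
Proof. by case/upair_eq => [[-> _] | [-> <-]]. Qed.

Lemma mono_eq I rho rho' : {in I, rho =1 rho'} -> monomial I rho = monomial I rho'.
Proof.
move=> h; apply: funext => p; rewrite /monomial; apply: eq_card => x; rewrite !inE; case xI: (x \in I) => //=.
by rewrite h.
Qed.

Lemma bij_of I J rho : {in I &, injective rho} -> {in I, forall x, rho x \in J} ->
  #|I| = #|J| -> is_bij I J rho.
Proof.
move=> inj hJ hc; split => //; apply/eqP; rewrite eqEcard card_in_imset // hc leqnn andbT.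
by apply/fintype.subsetP => _ /imsetP [x xI ->]; apply: hJ.
Qed.

Lemma exists_bij I J : #|I| = #|J| -> exists rho, is_bij I J rho.
Proof.
move=> hc.
pose rho := fun z => nth z (enum J) (index z (enum I)).
exists rho; apply: bij_of => //.
- move=> x y xI yI; rewrite /rho.
  have hx : (index x (enum I) < size (enum J))%N by rewrite -cardE -hc cardE index_mem mem_enum.
  have hy : (index y (enum I) < size (enum J))%N by rewrite -cardE -hc cardE index_mem mem_enum.
  rewrite (set_nth_default x _ hy) => /eqP; rewrite nth_uniq ?enum_uniq // => /eqP e.
  by rewrite -[x](@nth_index _ x x (enum I)) ?mem_enum // e nth_index ?mem_enum.
- move=> x xI; rewrite /rho -(mem_enum (mem J)) mem_nth //.
  by rewrite -cardE -hc cardE index_mem mem_enum.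
Qed.

Lemma two_bij I J : #|I| = #|J| -> (1 < #|I|)%N ->
  exists rho1 rho2, [/\ is_bij I J rho1, is_bij I J rho2 & monomial I rho1 <> monomial I rho2].
Proof.
move=> hc /card_gt1P [i1 [i2 [i1I i2I ne]]].
have [rho1 [inj1 im1]] := exists_bij hc.
have map1 : {in I, forall x, rho1 x \in J} by move=> x xI; rewrite -im1 imset_f.
pose sw := fun z => if z == i1 then i2 else if z == i2 then i1 else z.
have ne' : i2 != i1 by rewrite eq_sym.
have swK : involutive sw.
  move=> z; rewrite /sw; have [->|n1] := eqVneq z i1.
    by rewrite eqxx (negbTE ne').
  have [->|n2] := eqVneq z i2; first by rewrite eqxx.
  by rewrite (negbTE n1) (negbTE n2).
have swI : {in I, forall x, sw x \in I}.
  by move=> x xI; rewrite /sw; case: eqP => // _; case: eqP.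
exists rho1, (rho1 \o sw); split.
- by split.
- apply: bij_of => //.
  + move=> x y xI yI /= /inj1 h; apply: (can_inj swK); apply: h; exact: swI.
  + by move=> x xI /=; apply: map1; apply: swI.
move=> E.
pose p := upair i1 (rho1 i1).
have := congr1 (fun f => f p) E; rewrite /monomial => /eqP; apply/negP; rewrite neq_ltn; apply/orP; right.
apply: proper_card; apply/properP; split.
  apply/fintype.subsetP => x; rewrite !inE => /andP [xI /eqP hx]; rewrite xI /=.
  move: hx; rewrite /= /sw; have [->|n1] := eqVneq x i1.
    by move=> _; apply/eqP.
  have [->|n2] := eqVneq x i2.
    by move=> /upair_l h; move: ne'; rewrite h eqxx.
  by move=> ->.
exists i1; first by rewrite !inE i1I eqxx.
rewrite !inE i1I /= /sw eqxx; apply/eqP => /upair_r /inj1 h.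
by move: ne; rewrite h // eqxx.
Qed.

End Comb.

Section Main.
Local Open Scope ring_scope.
Variable R : realType.
Variable n : nat.
Variable A : 'M[R]_n.
Hypothesis hs : forall x y, A x y = A y x.
Implicit Types (I J : {set 'I_n}) (rho : 'I_n -> 'I_n).

Definition Half := forall x y, A x y *+ 2 = A x x + A y y.

Lemma kap_half : sym_kapranov_rank_one A -> Half.
Proof.
move=> [L [[_ [Ls Ld]] Lr]] x y.
have := hmul_deg_eq (Ld x x) (Ld y y) (Ld x y) (Ld y x) (Lr x y x y).
by rewrite (hs y x) mulr2n => ->.
Qed.

Lemma half_kap : Half -> sym_kapranov_rank_one A.
Proof.
move=> H; exists (fun i j => delta (A i j)); split; [split; [|split]|].
- move=> i j S sS [s Ss]; exists (A i j).
    by have := sS s Ss; rewrite /supp /delta /=; case: (s =P A i j) => [<- //|]; rewrite eqxx.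
  move=> x Sx; have := sS x Sx; rewrite /supp /delta /=.
  by case: (x =P A i j) => [-> _|]; [exact: lexx | rewrite eqxx].
- by move=> i j; rewrite hs.
- move=> i j; split; first by rewrite /delta eqxx oner_neq0.
  move=> x; rewrite /delta.
  by case: (x =P A i j) => [-> _|]; [exact: lexx | rewrite eqxx].
- move=> i j k l; apply: funext => c; rewrite !hmul_delta; congr delta.
  have h1 := H i k; have h2 := H j l; have h3 := H i l; have h4 := H j k.
  rewrite !mulr2n in h1 h2 h3 h4; lra.
Qed.

Lemma value_half I J rho : Half -> is_bij I J rho ->
  mvalue A I rho *+ 2 = \sum_(i in I) A i i + \sum_(j in J) A j j.
Proof.
move=> H [inj im]; rewrite /mvalue -sumrMnl.
under eq_bigr do rewrite H.
by rewrite big_split /= -im big_imset.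
Qed.

Lemma half_sing I J : Half -> #|I| = #|J| -> (1 < #|I|)%N -> sym_trop_singular A I J.
Proof.
move=> H hc h1; have [r1 [r2 [b1 b2 m12]]] := two_bij hc h1.
have eqv : forall rho, is_bij I J rho -> mvalue A I r1 = mvalue A I rho.
  move=> rho b; have := value_half H b; rewrite -(value_half H b1).
  by rewrite !mulr2n => e; lra.
exists r1, r2; split => //; first exact: eqv.
by move=> rho b; rewrite (eqv rho b).
Qed.

Lemma nonsing1 : (0 < n)%N -> has_nonsing_sub A 1.
Proof.
move=> n0; pose i := Ordinal n0.
exists [set i], [set i]; split; rewrite ?cards1 //.
move=> [r1 [r2 [[_ im1] [_ im2] m12 _ _]]]; apply: m12.
have f1 : r1 i = i by apply/set1P; rewrite -im1 imset_f // set11.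
have f2 : r2 i = i by apply/set1P; rewrite -im2 imset_f // set11.
by apply: mono_eq => x /set1P ->; rewrite f1 f2.
Qed.

Lemma sing_half : all_2x2_singular A -> Half.
Proof.
move=> S x y; have [<-|ne] := eqVneq x y; first by rewrite mulr2n.
have c2 : #|[set x; y]| = 2%N by rewrite cards2 ne.
have [r1 [r2 [b1 b2 m12 v12 _]]] := S _ _ c2 c2.
have cases : forall rho, is_bij [set x; y] [set x; y] rho ->
    (rho x = x /\ rho y = y) \/ (rho x = y /\ rho y = x).
  move=> rho [inj im].
  have xI : x \in [set x; y] by rewrite !inE eqxx.
  have yI : y \in [set x; y] by rewrite !inE eqxx orbT.
  have /set2P hx : rho x \in [set x; y] by rewrite -im; apply: imset_f.
  have /set2P hy : rho y \in [set x; y] by rewrite -im; apply: imset_f.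
  have nr : rho x != rho y by apply/eqP => /inj h; move: ne; rewrite h ?eqxx.
  case: hx hy nr => -> [] -> //; rewrite ?eqxx //; tauto.
have mv : forall rho, mvalue A [set x; y] rho = A x (rho x) + A y (rho y).
  by move=> rho; rewrite /mvalue big_setU1 ?big_set1 //= !inE.
have agree : forall rho rho', rho x = rho' x -> rho y = rho' y ->
    monomial [set x; y] rho = monomial [set x; y] rho'.
  by move=> rho rho' ex ey; apply: mono_eq => z /set2P [] ->.
move: v12; rewrite !mv.
case: (cases _ b1) => [[e1 f1]|[e1 f1]]; case: (cases _ b2) => [[e2 f2]|[e2 f2]].
- by case: m12; apply: agree; rewrite ?e1 ?e2 ?f1 ?f2.
- by rewrite e1 f1 e2 f2 (hs y x) mulr2n => ->.
- by rewrite e1 f1 e2 f2 (hs y x) mulr2n => <-.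
- by case: m12; apply: agree; rewrite ?e1 ?e2 ?f1 ?f2.
Qed.

End Main.

Local Open Scope ring_scope.

Theorem theorem5 (n : nat) (A : 'M[Rdefinitions.R]_n) :
  (0 < n)%N -> A^T = A ->
  (sym_trop_rank_eq A 1 <-> sym_kapranov_rank_one A) /\
  (all_2x2_singular A <-> sym_kapranov_rank_one A).
Proof.
move=> n0 hT.
have hs : forall x y, A x y = A y x.
  by move=> x y; rewrite -[in LHS]hT mxE.
have K2 : all_2x2_singular A <-> sym_kapranov_rank_one A.
  split; first by move=> S; apply: (half_kap hs); apply: (sing_half hs).
  move=> K I J c1 c2; apply: half_sing (kap_half hs K) _ _; rewrite ?c1 ?c2 //.
split => //; split.
  move=> [_ nr]; apply/K2 => I J c1 c2.
  case: (pselect (sym_trop_singular A I J)) => // ns.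
  by case: (nr 2%N isT); exists I, J; split.
move=> K; split; first exact: nonsing1.
move=> r' hr [I [J [c1 c2 ns]]]; apply: ns.
by apply: half_sing (kap_half hs K) _ _; rewrite ?c1 ?c2.
Qed.
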